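(* Let $n\ge n_0\ge0$ be integers, let $u=(u_k)_{k\ge0}$ be a sequence of positive reals that is $\alpha$-moderate from $n_0$ onwards, and let $(w_k)_{k\ge0}\subset\mathbb{R}^d$, $w^*\in\mathbb{R}^d$ satisfy $\|w_k-w^*\|\le u_k$ for all $n_0\le k\le n$. Then $$\|T_{n+1}\|\le\frac{2e^{q_1/2}}{q_1}\,C_U\,\|W_1W_2^{-1}\|\,C_\theta\,\frac{\alpha_n}{\beta_n}u_n .$$
   Context: $1>\alpha>\beta>0$, $\alpha_n=(n+1)^{-\alpha}$, $\beta_n=(n+1)^{-\beta}$. $X_1\in\mathbb{R}^{d\times d}$ with $X_1+X_1^\top$ positive definite, $q_1=\lambda_{\min}(X_1+X_1^\top)/4$; $W_1\in\mathbb{R}^{d\times d}$, $W_2\in\mathbb{R}^{d\times d}$ invertible. $C_\theta$ is the constant $\max\{1,\sqrt{\max_{0\le\ell_1\le\ell_2\le K}\prod_{\ell=\ell_1}^{\ell_2}e^{\alpha_\ell(\mu+2q_1)}}\}$ with $\mu=-\lambda_{\min}(X_1+X_1^\top)+\lambda_{\max}(X_1^\top X_1)$ and $K=\lceil(\lambda_{\max}(X_1^\top X_1)/(\lambda_{\min}(X_1+X_1^\top)-2q_1))^{1/\alpha}\rceil$. $C_U=\|X_1\|+2(\alpha-\beta)(1+\|X_1\|)$. $T_{n+1}=\sum_{k=n_0+1}^{n}\Big(\prod_{j=k+1}^{n}(I-\alpha_jX_1)\Big)\Big[\frac{\alpha_k}{\beta_k}I-\frac{\alpha_{k-1}}{\beta_{k-1}}(I-\alpha_kX_1)\Big]W_1W_2^{-1}(w_k-w^*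 )$ (empty products are $I$). A positive sequence $u$ is $\alpha$-moderate from $k_0$ onwards if $\frac{u_k}{u_{k+1}}\le\frac{\alpha_{k+1}}{\alpha_k}\frac{\beta_k}{\beta_{k+1}}e^{(q_1/2)\alpha_{k+1}}$ for all $k\ge k_0$. Norms are spectral/Euclidean. *)

(* Defs.v *)
(* Matrices in R^{d x d} are represented as
   functions nat -> nat -> R of which only the entries with indices < d matter;
   vectors in R^d as functions nat -> R (only coordinates < d matter). *)
From Stdlib Require Import Reals Lra Lia ClassicalEpsilon.
Open Scope R_scope.

Definition Vec := nat -> R.
Definition Mat := nat -> nat -> R.

Fixpoint rsum (n : nat) (f : nat -> R) : R :=
  match n with O => 0 | S m => rsum m f + f m end.

Fixpoint rprod (n : nat) (f : nat -> R) : R :=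
  match n with O => 1 | S m => rprod m f * f m end.

Definition rsum_range (a b : nat) (f : nat -> R) : R := rsum (S b - a) (fun t => f (a + t)%nat).
Definition rprod_range (a b : nat) (f : nat -> R) : R := rprod (S b - a) (fun t => f (a + t)%nat).

Definition idm : Mat := fun i j => if Nat.eqb i j then 1 else 0.
Definition madd (A B : Mat) : Mat := fun i j => A i j + B i j.
Definition mscale (c : R) (A : Mat) : Mat := fun i j => c * A i j.
Definition mtr (A : Mat) : Mat := fun i j => A j i.
Definition mmul (d : nat) (A B : Mat) : Mat := fun i j => rsum d (fun k => A i k * B k j).
Definition mvec (d : nat) (A : Mat) (v : Vec) : Vec := fun i => rsum d (fun k => A i k * v k).
Definition vsub (v w : Vec) : Vec := fun i => v i - w i.

Definition vnorm (d : nat) (v : Vec) : R := sqrt (rsum d (fun i => v i ^ 2)).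

Definition opnorm (d : nat) (A : Mat) : R :=
  epsilon (inhabits 0)
    (fun s => is_lub (fun r => exists v : Vec, vnorm d v <= 1 /\ r = vnorm d (mvec d A v)) s).

Definition is_eigenvalue (d : nat) (A : Mat) (l : R) : Prop :=
  exists v : Vec, (exists i, (i < d)%nat /\ v i <> 0) /\
    forall i, (i < d)%nat -> mvec d A v i = l * v i.

Definition lambda_min (d : nat) (A : Mat) : R :=
  epsilon (inhabits 0)
    (fun l => is_eigenvalue d A l /\ forall m, is_eigenvalue d A m -> l <= m).
Definition lambda_max (d : nat) (A : Mat) : R :=
  epsilon (inhabits 0)
    (fun l => is_eigenvalue d A l /\ forall m, is_eigenvalue d A m -> m <= l).

Definition pos_def (d : nat) (S : Mat) : Prop :=
  forall v : Vec, (exists i, (i < d)%nat /\ v i <> 0) ->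
    0 < rsum d (fun i => v i * mvec d S v i).

(* step sizes alpha_n = (n+1)^{-alpha}, beta_n = (n+1)^{-beta} *)
Definition step (a : R) (n : nat) : R := Rpower (INR n + 1) (- a).

Definition q1 (d : nat) (X1 : Mat) : R := lambda_min d (madd X1 (mtr X1)) / 4.
Definition mu (d : nat) (X1 : Mat) : R :=
  - lambda_min d (madd X1 (mtr X1)) + lambda_max d (mmul d (mtr X1) X1).

(* ceiling of a real number *)
Definition ceil_nat (x : R) : nat := Z.to_nat (1 - up (- x)).

Definition Kc (d : nat) (alpha : R) (X1 : Mat) : nat :=
  ceil_nat (Rpower (lambda_max d (mmul d (mtr X1) X1) /
                    (lambda_min d (madd X1 (mtr X1)) - 2 * q1 d X1)) (1 / alpha)).

(* max over 0 <= l1 <= l2 <= K of F l1 l2 *)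
Fixpoint max_l1 (l2 : nat) (F : nat -> nat -> R) (m : nat) : R :=
  match m with O => F O l2 | S m' => Rmax (max_l1 l2 F m') (F (S m') l2) end.
Fixpoint max_tri (K : nat) (F : nat -> nat -> R) : R :=
  match K with O => max_l1 O F O | S K' => Rmax (max_tri K' F) (max_l1 (S K') F (S K')) end.

Definition C_theta (d : nat) (alpha : R) (X1 : Mat) : R :=
  Rmax 1 (sqrt (max_tri (Kc d alpha X1)
     (fun l1 l2 => rprod_range l1 l2
         (fun l => exp (step alpha l * (mu d X1 + 2 * q1 d X1)))))).

Definition C_U (d : nat) (alpha beta : R) (X1 : Mat) : R :=
  opnorm d X1 + 2 * (alpha - beta) * (1 + opnorm d X1).

(* ordered matrix product A_a * A_{a+1} * ... * A_b (identity if b < a) *)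
Fixpoint mprod (d : nat) (f : nat -> Mat) (a m : nat) : Mat :=
  match m with O => idm | S m' => mmul d (mprod d f a m') (f (a + m')%nat) end.
Definition mprod_range (d : nat) (f : nat -> Mat) (a b : nat) : Mat :=
  mprod d f a (S b - a).

Definition Ifac (d : nat) (alpha : R) (X1 : Mat) (j : nat) : Mat :=
  madd idm (mscale (- step alpha j) X1).

(* T_{n+1} where M = W1 W2^{-1} *)
Definition T_next (d : nat) (alpha beta : R) (X1 M : Mat) (w : nat -> Vec) (wstar : Vec)
  (n0 n : nat) : Vec :=
  fun i => rsum_range (S n0) n (fun k =>
    mvec d
      (mmul d (mprod_range d (Ifac d alpha X1) (S k) n)
        (mmul d
          (madd (mscale (step alpha k / step beta k) idm)
                (mscale (- (step alpha (k - 1) / step beta (k - 1))) (Ifac d alpha X1 k)))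
          M))
      (vsub (w k) wstar) i).

Definition alpha_moderate (alpha beta : R) (q : R) (u : nat -> R) (k0 : nat) : Prop :=
  forall k : nat, (k0 <= k)%nat ->
    u k / u (S k) <= (step alpha (S k) / step alpha k) * (step beta k / step beta (S k))
                       * exp ((q / 2) * step alpha (S k)).

(* Main.v *)
Require Import Defs.
From Stdlib Require Import Reals Lra Lia ClassicalEpsilon.
Open Scope R_scope.
Module Bridge.
From mathcomp Require Import all_boot all_algebra.
From mathcomp Require Import Rstruct.
Import GRing.Theory.
Local Open Scope ring_scope.

Lemma rsum_big d (f : nat -> R) : rsum d f = (\sum_(k < d) f k)%R.
Proof.
elim: d => [|d IH] /=; first by rewrite big_ord0.
by rewrite big_ord_recr /= IH.
Qed.

Lemma bridge d (A : Mat) :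
  (exists v : Vec, (exists i, lt i d /\ v i <> R0) /\ forall i, lt i d -> mvec d A v i = R0)
  \/ (exists B : Mat, forall i j, lt i d -> lt j d -> mmul d B A i j = idm i j).
Proof.
pose Am : 'M[R]_d := \matrix_(i, j) A j i.
case: (boolP (\det Am == 0)) => [/det0P [v nz vA] | ndet].
  left.
  exists (fun k => match ltnP k d with LtnNotGeq h => v ord0 (Ordinal h) | _ => R0 end).
  split.
    have [j vj] : exists j, v ord0 j != R0.
      apply/existsP; move: nz; apply: contraR; rewrite negb_exists => /forallP H.
      apply/eqP/matrixP => i j; rewrite ord1 mxE; exact/eqP/negbNE/H.
    exists j; split; first by apply/ltP.
    case: ltnP => h; last by rewrite leqNgt ltn_ord in h.
    by move/eqP: vj; rewrite (_ : Ordinal h = j) //; apply: val_inj.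
  move=> i /ltP hi; rewrite /mvec rsum_big.
  have := congr1 (fun M : 'rV[R]_d => M ord0 (Ordinal hi)) vA; rewrite !mxE => E.
  transitivity (\sum_j v ord0 j * Am j (Ordinal hi)); last exact: E.
  apply eq_bigr => k _; rewrite mxE mulrC; congr (_ * _).
  case: ltnP => h; last by rewrite leqNgt ltn_ord in h.
  by rewrite (_ : Ordinal h = k) //; apply: val_inj.
right.
have U : Am \in unitmx by rewrite unitmxE unitfE.
pose Inv := invmx Am.
exists (fun i j => match ltnP i d, ltnP j d with
   | LtnNotGeq hi, LtnNotGeq hj => Inv (Ordinal hj) (Ordinal hi) | _, _ => R0 end).
move=> i j /ltP hi /ltP hj.
have E := congr1 (fun M : 'M[R]_d => M (Ordinal hj) (Ordinal hi)) (mulmxV U).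
rewrite /= !mxE in E.
rewrite /mmul rsum_big /idm.
have -> : Nat.eqb i j = (Ordinal hj == Ordinal hi).
  apply/idP/idP.
    by move/PeanoNat.Nat.eqb_eq => e; apply/eqP/val_inj => /=.
  by move/eqP/(congr1 val) => /= ->; apply/PeanoNat.Nat.eqb_eq.
transitivity (\sum_k Am (Ordinal hj) k * invmx Am k (Ordinal hi)); last by rewrite E; case: (_ == _).
apply eq_bigr => k _; rewrite mxE mulrC.
case: ltnP => h1; last by rewrite leqNgt hi in h1.
case: ltnP => h2; last by rewrite leqNgt ltn_ord in h2.
rewrite (_ : Ordinal h1 = Ordinal hi); last exact: val_inj.
by rewrite (_ : Ordinal h2 = k) //; apply: val_inj.
Qed.
End Bridge.
Set Bullet Behavior "Strict Subproofs".


Lemma rsum_ext n f g : (forall i, (i < n)%nat -> f i = g i) -> rsum n f = rsum n g.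
Proof. induction n; simpl; intros H; auto. rewrite IHn by (intros; apply H; lia). rewrite H by lia. auto. Qed.

Lemma rsum_plus n f g : rsum n (fun i => f i + g i) = rsum n f + rsum n g.
Proof. induction n; simpl; [lra|rewrite IHn; lra]. Qed.

Lemma rsum_scal n c f : rsum n (fun i => c * f i) = c * rsum n f.
Proof. induction n; simpl; [lra|rewrite IHn; lra]. Qed.

Lemma rsum_scalr n c f : rsum n (fun i => f i * c) = rsum n f * c.
Proof. induction n; simpl; [lra|rewrite IHn; lra]. Qed.

Lemma rsum_zero n : rsum n (fun _ => 0) = 0.
Proof. induction n; simpl; [lra|rewrite IHn; lra]. Qed.

Lemma rsum_le n f g : (forall i, (i < n)%nat -> f i <= g i) -> rsum n f <= rsum n g.
Proof. induction n; simpl; intros H; [lra|]. assert (f n <= g n) by (apply H; lia). assert (rsum n f <= rsum n g) by (apply IHn; intros; apply H; lia). lra. Qed.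

Lemma rsum_nonneg n f : (forall i, (i < n)%nat -> 0 <= f i) -> 0 <= rsum n f.
Proof. intros H. rewrite <- (rsum_zero n). apply rsum_le. auto. Qed.

Lemma rsum_swap n m (f : nat -> nat -> R) :
  rsum n (fun i => rsum m (fun j => f i j)) = rsum m (fun j => rsum n (fun i => f i j)).
Proof.
  induction n; simpl.
  - rewrite rsum_zero. auto.
  - rewrite IHn. rewrite <- rsum_plus. auto.
Qed.

Lemma rsum_shift n f : rsum (S n) f = f O + rsum n (fun t => f (S t)).
Proof. induction n; simpl in *; [lra|]. rewrite IHn. lra. Qed.

Lemma rsum_add n m f : rsum (n + m) f = rsum n f + rsum m (fun t => f (n + t)%nat).
Proof. induction m; simpl. rewrite Nat.add_0_r; lra. rewrite Nat.add_succ_r. simpl. rewrite IHm. lra. Qed.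

Definition dot (d : nat) (v w : Vec) := rsum d (fun i => v i * w i).
Definition nsq (d : nat) (v : Vec) := rsum d (fun i => v i ^ 2).

Lemma nsq_dot d v : nsq d v = dot d v v.
Proof. apply rsum_ext. intros; simpl; ring. Qed.

Lemma nsq_nonneg d v : 0 <= nsq d v.
Proof. apply rsum_nonneg. intros. apply pow2_ge_0. Qed.

Lemma vnorm_nsq d v : vnorm d v = sqrt (nsq d v).
Proof. reflexivity. Qed.

Lemma vnorm_nonneg d v : 0 <= vnorm d v.
Proof. apply sqrt_pos. Qed.

Lemma vnorm_sq d v : vnorm d v ^ 2 = nsq d v.
Proof. unfold vnorm. rewrite pow2_sqrt; auto. apply nsq_nonneg. Qed.

Lemma discr A B C : (forall t, 0 <= A - 2 * t * B + t ^ 2 * C) -> B ^ 2 <= A * C.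
Proof.
  intros H.
  assert (HA : 0 <= A) by (specialize (H 0); simpl in H; lra).
  assert (HC : 0 <= C).
  { destruct (Rle_dec 0 C); auto. exfalso.
    set (t := (2 * Rabs B + A + 1) / (- C) + 1).
    assert (Ht : 1 <= t). { unfold t. assert (0 <= (2 * Rabs B + A + 1) / - C). apply Rle_mult_inv_pos; [pose proof (Rabs_pos B); lra| lra]. lra. }
    specialize (H t).
    assert (E : t * (-C) >= 2 * Rabs B + A + 1).
    { unfold t. rewrite Rmult_plus_distr_r. unfold Rdiv. rewrite Rmult_assoc, Rinv_l by lra. pose proof (Rabs_pos B). lra. }
    assert (t * B <= t * Rabs B) by (apply Rmult_le_compat_l; [lra| apply RRle_abs]).
    assert (t * Rabs B >= Rabs B) by (pose proof (Rabs_pos B); nra).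
    assert (t ^ 2 * C <= - t * (2 * Rabs B + A + 1)) by (simpl; nra). assert (- (t * B) <= t * Rabs B) by (assert (- B <= Rabs B) by (rewrite <- Rabs_Ropp; apply RRle_abs); nra). assert (A * (1 - t) <= 0) by nra. lra. }
  destruct (Req_dec C 0) as [C0|C0].
  - subst C. destruct (Req_dec B 0) as [B0|B0]. subst; nra.
    exfalso. specialize (H ((A + 1) / (2 * B))).
    replace (2 * ((A + 1) / (2 * B)) * B) with (A + 1) in H by (field; auto). nra.
  - specialize (H (B / C)).
    replace (A - 2 * (B / C) * B + (B / C) ^ 2 * C) with ((A * C - B ^ 2) / C) in H by (field; auto).
    assert (0 < C) by lra.
    assert (0 <= A * C - B ^ 2). { apply (Rmult_le_compat_r C) in H; [|lra]. unfold Rdiv in H. rewrite Rmult_assoc, Rinv_l in H by lra. lra. }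
    lra.
Qed.

Lemma cauchy_schwarz d v w : dot d v w ^ 2 <= nsq d v * nsq d w.
Proof.
  apply discr. intros t.
  replace (nsq d v - 2 * t * dot d v w + t ^ 2 * nsq d w) with (nsq d (fun i => v i - t * w i)).
  apply nsq_nonneg.
  unfold nsq, dot.
  replace (rsum d (fun i => v i ^ 2) - 2 * t * rsum d (fun i => v i * w i) + t ^ 2 * rsum d (fun i => w i ^ 2)) with (rsum d (fun i => v i ^ 2) + (-(2*t)) * rsum d (fun i => v i * w i) + t^2 * rsum d (fun i => w i ^2)) by ring.
  rewrite <- !rsum_scal, <- !rsum_plus. apply rsum_ext; intros; ring.
Qed.

Lemma dot_le d v w : dot d v w <= vnorm d v * vnorm d w.
Proof.
  pose proof (cauchy_schwarz d v w).
  pose proof (vnorm_nonneg d v). pose proof (vnorm_nonneg d w).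
  rewrite <- vnorm_sq, <- (vnorm_sq d w) in H.
  destruct (Rle_dec (dot d v w) 0). nra.
  apply Rsqr_incr_0_var; [|nra]. unfold Rsqr. nra.
Qed.

Lemma vnorm_triangle d v w : vnorm d (fun i => v i + w i) <= vnorm d v + vnorm d w.
Proof.
  pose proof (vnorm_nonneg d v). pose proof (vnorm_nonneg d w).
  pose proof (vnorm_nonneg d (fun i => v i + w i)).
  apply Rsqr_incr_0_var; [|nra]. unfold Rsqr.
  replace (vnorm d (fun i => v i + w i) * vnorm d (fun i => v i + w i)) with (vnorm d (fun i => v i + w i) ^ 2) by ring.
  rewrite vnorm_sq.
  replace (nsq d (fun i => v i + w i)) with (nsq d v + 2 * dot d v w + nsq d w).
  rewrite <- !vnorm_sq. pose proof (dot_le d v w). nra.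
  unfold nsq, dot.
  rewrite <- rsum_scal, <- !rsum_plus. apply rsum_ext; intros; ring.
Qed.

Lemma vnorm_scal d c v : vnorm d (fun i => c * v i) = Rabs c * vnorm d v.
Proof.
  unfold vnorm. rewrite <- sqrt_Rsqr_abs, <- sqrt_mult; [| apply Rle_0_sqr | apply nsq_nonneg].
  f_equal. unfold Rsqr. rewrite <- rsum_scal. apply rsum_ext; intros; ring.
Qed.

Lemma vnorm_ext d v w : (forall i, (i < d)%nat -> v i = w i) -> vnorm d v = vnorm d w.
Proof. intros H. unfold vnorm. f_equal. apply rsum_ext. intros; rewrite H; auto. Qed.

Lemma vnorm_lin d a b v w : vnorm d (fun i => a * v i + b * w i) <= Rabs a * vnorm d v + Rabs b * vnorm d w.
Proof.
  eapply Rle_trans. apply (vnorm_triangle d (fun i => a * v i) (fun i => b * w i)).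
  rewrite !vnorm_scal. lra.
Qed.

Lemma vnorm_rsum d N (g : nat -> Vec) :
  vnorm d (fun i => rsum N (fun t => g t i)) <= rsum N (fun t => vnorm d (g t)).
Proof.
  induction N; simpl.
  - unfold vnorm. rewrite rsum_ext with (g := fun _ => 0). rewrite rsum_zero, sqrt_0. lra. intros; simpl; ring.
  - eapply Rle_trans. apply (vnorm_triangle d (fun i => rsum N (fun t => g t i)) (g N)). lra.
Qed.


Lemma rsum_delta d (v : Vec) i : (i < d)%nat -> rsum d (fun k => idm i k * v k) = v i.
Proof.
  induction d; intros H; [lia|]. simpl.
  destruct (Nat.eq_dec i d).
  - subst. rewrite rsum_ext with (g := fun _ => 0). rewrite rsum_zero. unfold idm. rewrite Nat.eqb_refl. ring.
    intros k Hk. unfold idm. destruct (Nat.eqb_spec d k); [lia|ring].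
  - rewrite IHd by lia. unfold idm. destruct (Nat.eqb_spec i d); [lia|ring].
Qed.

Lemma mvec_idm d v i : (i < d)%nat -> mvec d idm v i = v i.
Proof. apply rsum_delta. Qed.

Lemma mvec_ext d A v w i : (forall k, (k < d)%nat -> v k = w k) -> mvec d A v i = mvec d A w i.
Proof. intros H. unfold mvec. apply rsum_ext. intros; rewrite H; auto. Qed.

Lemma mvec_mmul d A B v i : mvec d (mmul d A B) v i = mvec d A (mvec d B v) i.
Proof.
  unfold mvec, mmul.
  transitivity (rsum d (fun k => rsum d (fun l => A i l * B l k * v k))).
  apply rsum_ext; intros; rewrite <- rsum_scalr; auto.
  rewrite rsum_swap. apply rsum_ext; intros. rewrite <- rsum_scal. apply rsum_ext; intros; ring.
Qed.

Lemma mvec_madd d A B v i : mvec d (madd A B) v i = mvec d A v i + mvec d B v i.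
Proof. unfold mvec, madd. rewrite <- rsum_plus. apply rsum_ext; intros; ring. Qed.

Lemma mvec_mscale d c A v i : mvec d (mscale c A) v i = c * mvec d A v i.
Proof. unfold mvec, mscale. rewrite <- rsum_scal. apply rsum_ext; intros; ring. Qed.

Lemma mvec_scalv d A c v i : mvec d A (fun k => c * v k) i = c * mvec d A v i.
Proof. unfold mvec. rewrite <- rsum_scal. apply rsum_ext; intros; ring. Qed.

Definition K2 d (A : Mat) := rsum d (fun i => rsum d (fun k => A i k ^ 2)).

Lemma K2_nonneg d A : 0 <= K2 d A.
Proof. apply rsum_nonneg; intros. apply rsum_nonneg; intros. apply pow2_ge_0. Qed.

Lemma mvec_nsq d A v : nsq d (mvec d A v) <= K2 d A * nsq d v.
Proof.
  unfold K2. rewrite <- rsum_scalr. apply rsum_le. intros i Hi.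
  apply (cauchy_schwarz d (fun k => A i k) v).
Qed.

Lemma mvec_vnorm d A v : vnorm d (mvec d A v) <= sqrt (K2 d A) * vnorm d v.
Proof.
  unfold vnorm. rewrite <- sqrt_mult by (apply K2_nonneg || apply nsq_nonneg).
  apply sqrt_le_1_alt. apply mvec_nsq.
Qed.

Definition opset d A := fun r => exists v : Vec, vnorm d v <= 1 /\ r = vnorm d (mvec d A v).

Lemma opnorm_lub d A : is_lub (opset d A) (opnorm d A).
Proof.
  unfold opnorm. apply epsilon_spec.
  assert (Hc : {m : R | is_lub (opset d A) m}). 2: { destruct Hc as [m Hm]. exists m. exact Hm. }
  apply completeness.
  - exists (sqrt (K2 d A)). intros r [v [Hv ->]].
    eapply Rle_trans. apply mvec_vnorm. pose proof (sqrt_pos (K2 d A)).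
    pose proof (vnorm_nonneg d v). nra.
  - exists (vnorm d (mvec d A (fun _ => 0))). exists (fun _ => 0). split; auto.
    unfold vnorm. rewrite rsum_ext with (g := fun _ => 0). rewrite rsum_zero, sqrt_0. lra. intros; simpl; ring.
Qed.

Lemma opnorm_nonneg d A : 0 <= opnorm d A.
Proof.
  destruct (opnorm_lub d A) as [H _]. apply H. exists (fun _ => 0). split.
  unfold vnorm. rewrite rsum_ext with (g := fun _ => 0). rewrite rsum_zero, sqrt_0. lra. intros; simpl; ring.
  symmetry. unfold vnorm. rewrite rsum_ext with (g := fun _ => 0). rewrite rsum_zero, sqrt_0. auto.
  intros. unfold mvec. rewrite rsum_ext with (g := fun _ => 0). rewrite rsum_zero. simpl; ring. intros; ring.
Qed.

Lemma nsq_zero_coord d v : nsq d v = 0 -> forall i, (i < d)%nat -> v i = 0.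
Proof.
  intros H. induction d; intros i Hi; [lia|]. change (rsum d (fun i => v i ^ 2) + v d ^ 2 = 0) in H.
  pose proof (nsq_nonneg d v). unfold nsq in H0. pose proof (pow2_ge_0 (v d)).
  destruct (Nat.eq_dec i d). subst. assert (v d ^ 2 = 0) by lra. nra.
  apply IHd; [unfold nsq; lra| lia].
Qed.

Lemma opnorm_bound d A v : vnorm d (mvec d A v) <= opnorm d A * vnorm d v.
Proof.
  pose proof (vnorm_nonneg d v) as Hn.
  destruct (Req_dec (vnorm d v) 0) as [H0|H0].
  - rewrite H0. pose proof (mvec_vnorm d A v). rewrite H0 in H. pose proof (vnorm_nonneg d (mvec d A v)). lra.
  - set (w := fun k => / vnorm d v * v k).
    assert (Hw : vnorm d w = 1). { unfold w. rewrite vnorm_scal. rewrite Rabs_pos_eq. field; auto. left; apply Rinv_0_lt_compat; lra. }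
    destruct (opnorm_lub d A) as [H _].
    assert (vnorm d (mvec d A w) <= opnorm d A) by (apply H; exists w; split; auto; lra).
    assert (vnorm d (mvec d A w) = / vnorm d v * vnorm d (mvec d A v)).
    { rewrite <- (Rabs_pos_eq (/ vnorm d v)) by (left; apply Rinv_0_lt_compat; lra).
      rewrite <- vnorm_scal. apply vnorm_ext. intros; unfold w; apply mvec_scalv. }
    rewrite H2 in H1. apply (Rmult_le_compat_l (vnorm d v)) in H1; [|lra].
    rewrite <- Rmult_assoc, Rinv_r in H1 by auto. lra.
Qed.

Lemma dot_mtr d A v w : dot d v (mvec d (mtr A) w) = dot d (mvec d A v) w.
Proof.
  unfold dot, mvec, mtr.
  transitivity (rsum d (fun i => rsum d (fun k => v i * A k i * w k))).
  apply rsum_ext; intros. rewrite <- rsum_scal. apply rsum_ext; intros; ring.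
  rewrite rsum_swap. apply rsum_ext; intros. rewrite <- rsum_scalr. apply rsum_ext; intros; ring.
Qed.

Lemma dot_ext d v v' w w' : (forall i, (i < d)%nat -> v i = v' i) -> (forall i, (i < d)%nat -> w i = w' i) ->
  dot d v w = dot d v' w'.
Proof. intros H1 H2. apply rsum_ext. intros; rewrite H1, H2; auto. Qed.

Lemma dot_sym d v w : dot d v w = dot d w v.
Proof. apply rsum_ext; intros; ring. Qed.


Definition quad d (S : Mat) v := dot d v (mvec d S v).
Definition symm d (S : Mat) := forall i j, (i < d)%nat -> (j < d)%nat -> S i j = S j i.

Lemma mvec_matext d A B v i : (forall k, (k < d)%nat -> A i k = B i k) -> mvec d A v i = mvec d B v i.
Proof. intros H. unfold mvec. apply rsum_ext. intros; rewrite H; auto. Qed.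

Lemma sym_dot d S v w : symm d S -> dot d v (mvec d S w) = dot d (mvec d S v) w.
Proof.
  intros H. rewrite <- dot_mtr. apply dot_ext; auto. intros. apply mvec_matext. intros; unfold mtr; apply H; auto.
Qed.

Lemma mvec_lin d A a b x y i : mvec d A (fun k => a * x k + b * y k) i = a * mvec d A x i + b * mvec d A y i.
Proof. unfold mvec. rewrite <- !rsum_scal, <- rsum_plus. apply rsum_ext; intros; ring. Qed.

Lemma dot_abs d v w : Rabs (dot d v w) <= vnorm d v * vnorm d w.
Proof.
  pose proof (cauchy_schwarz d v w).
  pose proof (vnorm_nonneg d v). pose proof (vnorm_nonneg d w).
  rewrite <- vnorm_sq, <- (vnorm_sq d w) in H.
  apply Rsqr_incr_0_var; [|nra]. rewrite <- Rsqr_abs. unfold Rsqr. nra.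
Qed.

Definition e0 : Vec := fun i => if Nat.eqb i 0 then 1 else 0.

Lemma nsq_e0 d : (1 <= d)%nat -> nsq d e0 = 1.
Proof.
  intros H. destruct d; [lia|]. unfold nsq. rewrite rsum_shift.
  rewrite rsum_ext with (g := fun _ => 0). rewrite rsum_zero. unfold e0. simpl. ring.
  intros; unfold e0; simpl; ring.
Qed.

Lemma nsq_pos d v : (exists i, (i < d)%nat /\ v i <> 0) -> 0 < nsq d v.
Proof.
  intros [i [Hi Hv]]. destruct (nsq_nonneg d v); auto.
  exfalso. apply Hv. apply (nsq_zero_coord d v); auto.
Qed.

Lemma eig_quad d S l v : (forall i, (i < d)%nat -> mvec d S v i = l * v i) -> quad d S v = l * nsq d v.
Proof.
  intros H. unfold quad. rewrite nsq_dot. unfold dot. rewrite <- rsum_scal. apply rsum_ext. intros. rewrite H; auto; ring.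
Qed.

Lemma nsq_scal d c v : nsq d (fun i => c * v i) = c ^ 2 * nsq d v.
Proof. unfold nsq. rewrite <- rsum_scal. apply rsum_ext; intros; ring. Qed.

Lemma quad_scal d S c v : quad d S (fun i => c * v i) = c ^ 2 * quad d S v.
Proof. unfold quad, dot. rewrite <- rsum_scal. apply rsum_ext; intros. rewrite mvec_scalv. ring. Qed.

Lemma dot_sub d x p q c : dot d x (fun i => p i - c * q i) = dot d x p - c * dot d x q.
Proof. unfold dot. rewrite <- rsum_scal. unfold Rminus. rewrite <- (Rmult_1_l (rsum d (fun i => c * (x i * q i)))).
  rewrite Ropp_mult_distr_l, <- rsum_scal, <- rsum_plus. apply rsum_ext; intros; ring. Qed.

Lemma dot_expand d x y p q t : dot d (fun i => x i - t * y i) (fun i => p i - t * q i) = dot d x p - t * dot d x q - t * dot d y p + t^2 * dot d y q.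
Proof. unfold dot. induction d; simpl; [ring|rewrite IHd; ring]. Qed.

Lemma min_eig d S : (1 <= d)%nat -> symm d S ->
  exists m, is_eigenvalue d S m /\ forall v, m * nsq d v <= quad d S v.
Proof.
  intros Hd HS.
  set (Q := fun r => exists v, nsq d v = 1 /\ r = - quad d S v).
  assert (Hc : {L | is_lub Q L}).
  { apply completeness.
    - exists (sqrt (K2 d S)). intros r [v [Hv ->]].
      pose proof (dot_abs d v (mvec d S v)). pose proof (mvec_vnorm d S v).
      assert (vnorm d v = 1) by (rewrite vnorm_nsq, Hv; apply sqrt_1).
      unfold quad. rewrite H1 in *. pose proof (Rabs_pos (dot d v (mvec d S v))).
      assert (- dot d v (mvec d S v) <= Rabs (dot d v (mvec d S v))) by (rewrite <- Rabs_Ropp; apply RRle_abs).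
      lra.
    - exists (- quad d S e0). exists e0. split; auto. apply nsq_e0; auto. }
  destruct Hc as [L [HL1 HL2]].
  set (m := - L).
  assert (Ha : forall v, nsq d v = 1 -> m <= quad d S v).
  { intros v Hv. assert (- quad d S v <= L) by (apply HL1; exists v; auto). unfold m; lra. }
  assert (Hb : forall eps, 0 < eps -> exists v, nsq d v = 1 /\ quad d S v < m + eps).
  { intros eps He. apply Classical_Prop.NNPP. intros Hn.
    assert (L <= L - eps). { apply HL2. intros r [v [Hv ->]]. destruct (Rlt_dec (quad d S v) (m + eps)).
      exfalso; apply Hn; exists v; auto. unfold m in n. lra. }
    lra. }
  assert (Hh : forall v, m * nsq d v <= quad d S v).
  { intros v. pose proof (nsq_nonneg d v). destruct H as [Hp|H0].
    - set (c := / sqrt (nsq d v)).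
      assert (Hs : 0 < sqrt (nsq d v)) by (apply sqrt_lt_R0; auto).
      assert (c ^ 2 * nsq d v = 1). { unfold c. rewrite <- (sqrt_sqrt (nsq d v)) at 2 by lra. field. lra. }
      pose proof (Ha (fun i => c * v i)). rewrite nsq_scal, quad_scal in H0. specialize (H0 H).
      assert (0 < c ^ 2) by (rewrite <- H in *; nra).
      apply (Rmult_le_reg_l (c ^ 2)); auto. rewrite <- Rmult_assoc, (Rmult_comm _ m), Rmult_assoc, H. lra.
    - rewrite <- H0. unfold quad, dot. rewrite rsum_ext with (g := fun _ => 0). rewrite rsum_zero. lra.
      intros. rewrite (nsq_zero_coord d v) by auto. ring. }
  set (A := madd S (mscale (- m) idm)).
  assert (HA : forall v i, (i < d)%nat -> mvec d A v i = mvec d S v i - m * v i).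
  { intros. unfold A. rewrite mvec_madd, mvec_mscale, mvec_idm; auto. ring. }
  set (b := fun x y => dot d x (mvec d A y)).
  assert (Hbsym : forall x y, b x y = b y x).
  { intros. unfold b. rewrite (dot_ext d x x (mvec d A y) (fun i => mvec d S y i - m * y i)); auto.
    rewrite (dot_ext d y y (mvec d A x) (fun i => mvec d S x i - m * x i)); auto.
    rewrite !dot_sub. rewrite (sym_dot d S x y HS), (dot_sym d (mvec d S x) y), (dot_sym d x y). auto. }
  assert (Hbpos : forall x, 0 <= b x x).
  { intros x. unfold b. rewrite (dot_ext d x x (mvec d A x) (fun i => mvec d S x i - m * x i)); auto.
    pose proof (Hh x). unfold quad in H. rewrite nsq_dot in H.
    rewrite dot_sub. lra. }
  assert (Hbcs : forall x y, b x y ^ 2 <= b x x * b y y).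
  { intros x y. apply discr. intros t.
    replace (b x x - 2 * t * b x y + t ^ 2 * b y y) with (b (fun k => x k - t * y k) (fun k => x k - t * y k)).
    apply Hbpos.
    unfold b. rewrite (dot_ext d (fun k => x k - t * y k) (fun k => x k - t * y k) (mvec d A (fun k => x k - t * y k)) (fun i => mvec d A x i - t * mvec d A y i)); auto.
    2: intros; unfold mvec; rewrite <- rsum_scal; unfold Rminus; rewrite <- (Rmult_1_l (rsum d (fun k => t * (A i k * y k)))), Ropp_mult_distr_l, <- rsum_scal, <- rsum_plus; apply rsum_ext; intros; ring.
    rewrite dot_expand. pose proof (Hbsym y x). unfold b in H. rewrite H. ring. }
  assert (Hsymm : symm d A).
  { intros i j Hi Hj. unfold A, madd, mscale, idm. rewrite HS by auto. rewrite Nat.eqb_sym. auto. }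
  assert (Hz : forall v, nsq d (mvec d A v) <= sqrt (K2 d A) * b v v).
  { intros v. set (z := mvec d A v).
    assert (E1 : b v z = nsq d z). { unfold b. rewrite (sym_dot d A v z Hsymm). rewrite nsq_dot. auto. }
    assert (E2 : b z z <= sqrt (K2 d A) * nsq d z).
    { unfold b. eapply Rle_trans. apply Rle_abs. eapply Rle_trans. apply dot_abs.
      pose proof (mvec_vnorm d A z). pose proof (vnorm_nonneg d z).
      rewrite <- (vnorm_sq d z). nra. }
    pose proof (Hbcs v z). rewrite E1 in H. pose proof (nsq_nonneg d z). pose proof (Hbpos v).
    destruct H0 as [Hp|H0].
    - apply (Rmult_le_reg_r (nsq d z)); auto. pose proof (sqrt_pos (K2 d A)). nra.
    - rewrite <- H0. pose proof (sqrt_pos (K2 d A)). nra. }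
  destruct (Bridge.bridge d A) as [[v0 [Hv0 Hker]] | [B HB]].
  - exists m. split; [|auto]. exists v0. split; auto. intros i Hi. specialize (Hker i Hi). rewrite HA in Hker; auto. lra.
  - exfalso.
    assert (Hinv : forall v, nsq d v <= K2 d B * (sqrt (K2 d A) * b v v)).
    { intros v. eapply Rle_trans; [|apply Rmult_le_compat_l; [apply K2_nonneg| apply Hz]].
      eapply Rle_trans; [|apply mvec_nsq]. right. unfold nsq. apply rsum_ext. intros i Hi.
      rewrite <- mvec_mmul. rewrite (mvec_matext d (mmul d B A) idm) by (intros; apply HB; auto).
      rewrite mvec_idm; auto. }
    set (C := K2 d B * sqrt (K2 d A)).
    assert (HC : 0 <= C) by (unfold C; apply Rmult_le_pos; [apply K2_nonneg|apply sqrt_pos]).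
    destruct (Hb (/ (C + 1))) as [v [Hv Hq]]. apply Rinv_0_lt_compat; lra.
    specialize (Hinv v). rewrite Hv in Hinv.
    assert (Hbv : b v v = quad d S v - m).
    { unfold b. rewrite (dot_ext d v v (mvec d A v) (fun i => mvec d S v i - m * v i)); auto.
      rewrite dot_sub. rewrite <- nsq_dot, Hv. unfold quad. ring. }
    rewrite Hbv in Hinv. fold C in Hinv. rewrite <- Rmult_assoc in Hinv. fold C in Hinv.
    assert (C * (quad d S v - m) <= C * / (C + 1)) by (apply Rmult_le_compat_l; lra).
    assert (C * / (C + 1) < 1). { apply (Rmult_lt_reg_r (C + 1)); [lra|]. rewrite Rmult_assoc, Rinv_l by lra. lra. }
    lra.
Qed.


Lemma lam_min_spec d S : (1 <= d)%nat -> symm d S ->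
  is_eigenvalue d S (lambda_min d S) /\ forall v, lambda_min d S * nsq d v <= quad d S v.
Proof.
  intros Hd HS. destruct (min_eig d S Hd HS) as [m [Hm Hq]].
  assert (P : is_eigenvalue d S m /\ forall m', is_eigenvalue d S m' -> m <= m').
  { split; auto. intros m' [w [Hw Hew]]. pose proof (eig_quad d S m' w Hew). pose proof (Hq w).
    pose proof (nsq_pos d w Hw). rewrite H in H0. apply (Rmult_le_reg_r (nsq d w)); auto. }
  pose proof (epsilon_spec (inhabits 0) (fun l => is_eigenvalue d S l /\ forall m', is_eigenvalue d S m' -> l <= m') (ex_intro _ m P)) as [E1 E2].
  fold (lambda_min d S) in E1, E2.
  split; auto. intros v. specialize (E2 m Hm). pose proof (nsq_nonneg d v). pose proof (Hq v). nra.
Qed.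

Lemma lam_max_spec d G : (1 <= d)%nat -> symm d G ->
  forall v, quad d G v <= lambda_max d G * nsq d v.
Proof.
  intros Hd HG. set (G' := mscale (-1) G).
  assert (HG' : symm d G') by (intros i j Hi Hj; unfold G', mscale; rewrite HG; auto).
  assert (Hq' : forall v, quad d G' v = - quad d G v).
  { intros. unfold quad, dot. rewrite <- (Rmult_1_l (rsum d (fun i => v i * mvec d G v i))), Ropp_mult_distr_l, <- rsum_scal.
    apply rsum_ext; intros. unfold G'. rewrite mvec_mscale. ring. }
  destruct (min_eig d G' Hd HG') as [m [Hm Hq]].
  assert (P : is_eigenvalue d G (- m) /\ forall m', is_eigenvalue d G m' -> m' <= - m).
  { split.
    - destruct Hm as [w [Hw Hew]]. exists w. split; auto. intros i Hi. specialize (Hew i Hi).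
      unfold G' in Hew. rewrite mvec_mscale in Hew. lra.
    - intros m' [w [Hw Hew]]. pose proof (eig_quad d G m' w Hew). pose proof (Hq w).
      pose proof (nsq_pos d w Hw). rewrite Hq', H in H0. apply (Rmult_le_reg_r (nsq d w)); auto. lra. }
  pose proof (epsilon_spec (inhabits 0) (fun l => is_eigenvalue d G l /\ forall m', is_eigenvalue d G m' -> m' <= l) (ex_intro _ (-m) P)) as [E1 E2].
  fold (lambda_max d G) in E1, E2.
  intros v. specialize (E2 (-m) (proj1 P)). pose proof (nsq_nonneg d v). pose proof (Hq v). rewrite Hq' in H0. nra.
Qed.

Section X.
Variable d : nat.
Variable X : Mat.

Lemma quad_S v : quad d (madd X (mtr X)) v = 2 * dot d v (mvec d X v).
Proof.
  unfold quad. rewrite (dot_ext d v v _ (fun i => mvec d X v i + mvec d (mtr X) v i)); auto.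
  2: intros; apply mvec_madd.
  transitivity (dot d v (mvec d X v) + dot d v (mvec d (mtr X) v)).
  unfold dot; rewrite <- rsum_plus; apply rsum_ext; intros; ring.
  rewrite dot_mtr, dot_sym. ring.
Qed.

Lemma quad_G v : quad d (mmul d (mtr X) X) v = nsq d (mvec d X v).
Proof.
  unfold quad. rewrite (dot_ext d v v _ (mvec d (mtr X) (mvec d X v))); auto.
  2: intros; apply mvec_mmul.
  rewrite dot_mtr, nsq_dot. auto.
Qed.

Lemma symm_S : symm d (madd X (mtr X)).
Proof. intros i j _ _. unfold madd, mtr. ring. Qed.

Lemma symm_G : symm d (mmul d (mtr X) X).
Proof. intros i j _ _. unfold mmul, mtr. apply rsum_ext; intros; ring. Qed.

Lemma Ifac_nsq a v : 0 <= a -> (1 <= d)%nat ->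
  nsq d (mvec d (madd idm (mscale (- a) X)) v) <=
  (1 - a * lambda_min d (madd X (mtr X)) + a ^ 2 * lambda_max d (mmul d (mtr X) X)) * nsq d v.
Proof.
  intros Ha Hd.
  assert (E : nsq d (mvec d (madd idm (mscale (- a) X)) v) = nsq d v - a * quad d (madd X (mtr X)) v + a ^ 2 * quad d (mmul d (mtr X) X) v).
  { rewrite quad_S, quad_G. rewrite !nsq_dot.
    rewrite (dot_ext d _ (fun i => v i - a * mvec d X v i) _ (fun i => v i - a * mvec d X v i)).
    rewrite dot_expand. rewrite (dot_sym d (mvec d X v) v). ring.
    intros; rewrite mvec_madd, mvec_mscale, mvec_idm; auto; ring.
    intros; rewrite mvec_madd, mvec_mscale, mvec_idm; auto; ring. }
  rewrite E.
  pose proof (proj2 (lam_min_spec d _ Hd symm_S) v).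
  pose proof (lam_max_spec d _ Hd symm_G v).
  pose proof (pow2_ge_0 a).
  assert (a * (lambda_min d (madd X (mtr X)) * nsq d v) <= a * quad d (madd X (mtr X)) v) by (apply Rmult_le_compat_l; auto).
  assert (a ^ 2 * quad d (mmul d (mtr X) X) v <= a ^ 2 * (lambda_max d (mmul d (mtr X) X) * nsq d v)) by (apply Rmult_le_compat_l; auto).
  nra.
Qed.

End X.


Lemma exp_le x y : x <= y -> exp x <= exp y.
Proof. intros [H|H]; [left; apply exp_increasing; auto| subst; lra]. Qed.

Lemma ln_le x y : 0 < x -> x <= y -> ln x <= ln y.
Proof. intros H [H1|H1]; [left; apply ln_increasing; auto| subst; lra]. Qed.

Lemma ln_np1_nonneg n : 0 <= ln (INR n + 1).
Proof. rewrite <- ln_1. apply ln_le; [lra|]. pose proof (pos_INR n). lra. Qed.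

Lemma step_eq a n : step a n = exp (- a * ln (INR n + 1)).
Proof. reflexivity. Qed.

Lemma step_pos a n : 0 < step a n.
Proof. rewrite step_eq. apply exp_pos. Qed.

Lemma step_le1 a n : 0 <= a -> step a n <= 1.
Proof. intros. rewrite step_eq. apply Rle_trans with (exp 0); [apply exp_le|rewrite exp_0; lra]. pose proof (ln_np1_nonneg n). nra. Qed.

Lemma step_ge a n : a <= 1 -> / (INR n + 1) <= step a n.
Proof.
  intros. rewrite step_eq. pose proof (pos_INR n).
  rewrite <- (exp_ln (INR n + 1)) at 1 by lra. rewrite <- exp_Ropp. apply exp_le.
  pose proof (ln_np1_nonneg n). nra.
Qed.

Lemma ratio_eq a b n : step a n / step b n = exp (- (a - b) * ln (INR n + 1)).
Proof. rewrite !step_eq. unfold Rdiv. rewrite <- exp_Ropp, <- exp_plus. f_equal. ring. Qed.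

Lemma bernoulli g L : 0 <= g <= 1 -> 0 <= L -> exp (g * L) <= 1 - g + g * exp L.
Proof.
  intros Hg HL. set (u := exp (g * L)).
  assert (Hu : 0 < u) by apply exp_pos.
  assert (H1 : exp L >= u * (1 + (1 - g) * L)).
  { replace L with (g * L + (1 - g) * L) at 1 by ring. rewrite exp_plus. fold u.
    pose proof (exp_ineq1_le ((1 - g) * L)). apply Rle_ge. apply Rmult_le_compat_l; lra. }
  assert (H2 : u * (1 - g * L) <= 1).
  { pose proof (exp_ineq1_le (- (g * L))).
    assert (E : u * exp (- (g * L)) = 1) by (unfold u; rewrite <- exp_plus; replace (g * L + - (g * L)) with 0 by ring; apply exp_0).
    apply Rle_trans with (u * exp (- (g * L))); [apply Rmult_le_compat_l; lra | lra]. }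
  assert (g * exp L >= g * (u * (1 + (1 - g) * L))) by (apply Rle_ge, Rmult_le_compat_l; lra).
  assert (0 <= (1 - g) * (1 - u + g * u * L)) by (apply Rmult_le_pos; nra).
  nra.
Qed.

Lemma bracket_bound a b k : 0 < b -> b < a -> a < 1 -> (1 <= k)%nat ->
  0 <= step a (k - 1) / step b (k - 1) - step a k / step b k <=
  2 * (a - b) * step a k * (step a k / step b k).
Proof.
  intros Hb Hab Ha Hk.
  rewrite !ratio_eq.
  replace (INR (k - 1) + 1) with (INR k) by (rewrite minus_INR by lia; simpl; ring).
  assert (Hk0 : 1 <= INR k) by (apply (le_INR 1); lia).
  set (L := ln (INR k + 1) - ln (INR k)).
  assert (HeL : exp L = (INR k + 1) / INR k).
  { unfold L. unfold Rminus. rewrite exp_plus, exp_Ropp, !exp_ln by lra. field. lra. }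
  assert (HL : 0 <= L). { unfold L. pose proof (ln_le (INR k) (INR k + 1) ltac:(lra) ltac:(lra)). lra. }
  set (r := exp (- (a - b) * ln (INR k + 1))).
  assert (Hr : 0 < r) by apply exp_pos.
  assert (E : exp (- (a - b) * ln (INR k)) = r * exp ((a - b) * L)).
  { unfold r. rewrite <- exp_plus. f_equal. unfold L. ring. }
  rewrite E.
  pose proof (bernoulli (a - b) L ltac:(lra) HL). rewrite HeL in H.
  assert (1 <= exp ((a - b) * L)) by (rewrite <- exp_0; apply exp_le; nra).
  split. nra.
  pose proof (step_ge a k ltac:(lra)).
  assert (exp ((a - b) * L) - 1 <= (a - b) / INR k).
  { replace ((a - b) / INR k) with (1 - (a - b) + (a - b) * ((INR k + 1) / INR k) - 1) by (field; lra). lra. }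
  assert ((a - b) / INR k <= 2 * (a - b) * / (INR k + 1)).
  { apply (Rmult_le_reg_r (INR k * (INR k + 1))). nra. field_simplify; [|lra|lra]. nra. }
  assert (r * (exp ((a - b) * L) - 1) <= r * (2 * (a - b) * step a k)).
  { apply Rmult_le_compat_l; [lra|]. assert (2 * (a - b) * / (INR k + 1) <= 2 * (a - b) * step a k) by (apply Rmult_le_compat_l; lra). lra. }
  nra.
Qed.

Lemma ceil_nat_ge x : x <= INR (ceil_nat x).
Proof.
  unfold ceil_nat. destruct (archimed (- x)) as [H1 H2].
  set (z := (1 - up (- x))%Z).
  assert (Hz : x <= IZR z) by (unfold z; rewrite minus_IZR; simpl; lra).
  destruct (Z.lt_ge_cases z 0).
  - pose proof (pos_INR (Z.to_nat z)). assert (IZR z < 0) by (apply IZR_lt; auto). lra.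
  - rewrite INR_IZR_INZ, Znat.Z2Nat.id by lia. auto.
Qed.

Lemma Kc_prop a q Lam j : 0 < a -> 0 < q -> 0 <= Lam ->
  (ceil_nat (Rpower (Lam / (4 * q - 2 * q)) (1 / a)) <= j)%nat -> step a j * Lam <= 2 * q.
Proof.
  intros Ha Hq HL Hj.
  destruct (Req_dec Lam 0). subst. rewrite Rmult_0_r. lra.
  replace (4 * q - 2 * q) with (2 * q) in Hj by ring.
  set (x := Lam / (2 * q)) in Hj.
  assert (Hx : 0 < x) by (unfold x; apply Rdiv_lt_0_compat; lra).
  pose proof (ceil_nat_ge (Rpower x (1 / a))). apply le_INR in Hj.
  assert (Rpower x (1 / a) < INR j + 1) by lra.
  unfold Rpower in H1.
  assert ((1 / a) * ln x < ln (INR j + 1)).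
  { rewrite <- (ln_exp (1 / a * ln x)). apply ln_increasing; auto. apply exp_pos. }
  assert (ln x < a * ln (INR j + 1)).
  { apply (Rmult_lt_compat_l a) in H2; auto. replace (a * (1 / a * ln x)) with (ln x) in H2 by (field; lra). auto. }
  rewrite step_eq.
  assert (exp (- a * ln (INR j + 1)) < / x).
  { rewrite <- (exp_ln x) by auto. rewrite <- exp_Ropp. apply exp_increasing. lra. }
  unfold x in H4. rewrite Rinv_div in H4.
  apply Rlt_le. apply (Rmult_lt_compat_r Lam) in H4; [|lra]. replace (2 * q / Lam * Lam) with (2 * q) in H4 by (field; auto). auto.
Qed.

Lemma tele_term c x : 0 < c -> 0 <= x <= 1 -> c * x * exp (- c) <= 1 - exp (- (c * x)).
Proof.
  intros Hc Hx.
  pose proof (exp_ineq1_le (c * x)).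
  assert (E : exp (c * x) * exp (- (c * x)) = 1) by (rewrite <- exp_plus; replace (c * x + - (c * x)) with 0 by ring; apply exp_0).
  assert (exp (- c) <= exp (- (c * x))) by (apply exp_le; nra).
  pose proof (exp_pos (- (c * x))). pose proof (exp_pos (- c)).
  assert ((1 + c * x) * exp (- (c * x)) <= 1) by (rewrite <- E; apply Rmult_le_compat_r; lra).
  assert (c * x * exp (- c) <= c * x * exp (- (c * x))) by (apply Rmult_le_compat_l; nra).
  nra.
Qed.

Lemma telescope (E : nat -> R) m N : rsum N (fun t => E (S (m + t)) - E (m + t)%nat) = E (m + N)%nat - E m.
Proof. induction N; simpl. rewrite Nat.add_0_r; ring. rewrite IHN. rewrite Nat.add_succ_r. ring. Qed.

Lemma rprod_exp N g : rprod N (fun t => exp (g t)) = exp (rsum N g).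
Proof. induction N; simpl. rewrite exp_0; auto. rewrite IHN, exp_plus; auto. Qed.

Lemma max_l1_ge l1 l2 F m : (l1 <= m)%nat -> F l1 l2 <= max_l1 l2 F m.
Proof.
  induction m; intros H; simpl.
  - replace l1 with O by lia. lra.
  - destruct (Nat.eq_dec l1 (S m)). subst. apply Rmax_r. eapply Rle_trans; [apply IHm; lia| apply Rmax_l].
Qed.

Lemma max_tri_ge l1 l2 F K : (l1 <= l2)%nat -> (l2 <= K)%nat -> F l1 l2 <= max_tri K F.
Proof.
  intros H1. induction K; intros H2; simpl.
  - replace l2 with O in * by lia. replace l1 with O by lia. lra.
  - destruct (Nat.eq_dec l2 (S K)). subst. eapply Rle_trans; [apply max_l1_ge; eauto| apply Rmax_r].
    eapply Rle_trans; [apply IHK; lia| apply Rmax_l].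
Qed.

Lemma rsum_S n f : rsum (S n) f = rsum n f + f n.
Proof. reflexivity. Qed.

Lemma rsum_trunc N a K f :
  rsum N (fun t => if Nat.ltb (a + t) K then f (a + t)%nat else 0) = rsum (Nat.min N (K - a)) (fun t => f (a + t)%nat).
Proof.
  induction N. simpl; auto.
  rewrite rsum_S, IHN. destruct (Nat.ltb_spec (a + N) K).
  - replace (Nat.min (S N) (K - a)) with (S (Nat.min N (K - a))) by lia.
    rewrite rsum_S. replace (Nat.min N (K - a)) with N by lia. auto.
  - replace (Nat.min (S N) (K - a)) with (Nat.min N (K - a)) by lia. ring.
Qed.


Lemma prod_bound d (F : nat -> Mat) (cc : nat -> R) :
  (forall j v, vnorm d (mvec d (F j) v) <= cc j * vnorm d v) -> (forall j, 0 <= cc j) ->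
  forall m a y, vnorm d (mvec d (mprod d F a m) y) <= rprod m (fun t => cc (a + t)%nat) * vnorm d y.
Proof.
  intros HF Hc. induction m; intros a y; simpl.
  - rewrite (vnorm_ext d _ y). lra. intros; apply mvec_idm; auto.
  - rewrite (vnorm_ext d _ (mvec d (mprod d F a m) (mvec d (F (a + m)%nat) y))).
    2: intros; apply mvec_mmul.
    eapply Rle_trans. apply IHm.
    assert (0 <= rprod m (fun t => cc (a + t)%nat)).
    { clear IHm. induction m; simpl; [lra|]. apply Rmult_le_pos; auto. }
    rewrite Rmult_assoc. apply Rmult_le_compat_l; auto.
Qed.

Definition tl (al : nat -> R) (n k : nat) := rsum (S n - S k) (fun t => al (S k + t)%nat).

Lemma tl_n al n : tl al n n = 0.
Proof. unfold tl. rewrite Nat.sub_diag. reflexivity. Qed.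

Lemma tl_step al n k : (k < n)%nat -> tl al n k = al (S k) + tl al n (S k).
Proof.
  intros H. unfold tl. replace (S n - S k)%nat with (S (S n - S (S k))) by lia.
  rewrite rsum_shift. rewrite Nat.add_0_r. f_equal. apply rsum_ext. intros; f_equal; lia.
Qed.

Lemma chain (u r e : nat -> R) (c : R) n0 n :
  (forall k, (n0 <= k)%nat -> u k * r k <= u (S k) * r (S k) * exp (c * e (S k))) ->
  forall k, (n0 <= k <= n)%nat -> u k * r k <= u n * r n * exp (c * tl e n k).
Proof.
  intros H. assert (forall p k, (k + p = n)%nat -> (n0 <= k)%nat -> u k * r k <= u n * r n * exp (c * tl e n k)).
  { induction p; intros k Hk H0.
    - replace k with n by lia. rewrite tl_n, Rmult_0_r, exp_0. lra.
    - rewrite tl_step by lia. specialize (IHp (S k) ltac:(lia) ltac:(lia)).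
      eapply Rle_trans. apply H; auto.
      rewrite Rmult_plus_distr_l, exp_plus.
      pose proof (exp_pos (c * e (S k))).
      replace (u n * r n * (exp (c * e (S k)) * exp (c * tl e n (S k)))) with (u n * r n * exp (c * tl e n (S k)) * exp (c * e (S k))) by ring.
      apply Rmult_le_compat_r; lra. }
  intros k Hk. apply (H0 (n - k)%nat); lia.
Qed.

Lemma sum_bound (al : nat -> R) c n0 n :
  0 < c -> (forall k, 0 <= al k <= 1) ->
  rsum (n - n0) (fun t => al (S (n0 + t)) * exp (- c * tl al n (S (n0 + t)))) <= exp c / c.
Proof.
  intros Hc Hal.
  set (E := fun j => exp (- c * tl al n j)).
  assert (forall t, (t < n - n0)%nat -> al (S (n0 + t)) * exp (- c * tl al n (S (n0 + t))) <= exp c / c * (E (S (n0 + t)) - E (n0 + t)%nat)).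
  { intros t Ht. unfold E. rewrite (tl_step al n (n0 + t)) by lia.
    set (x := al (S (n0 + t))). set (T := tl al n (S (n0 + t))).
    pose proof (tele_term c x Hc (Hal _)).
    replace (exp (- c * (x + T))) with (exp (- c * T) * exp (- (c * x))) by (rewrite <- exp_plus; f_equal; ring).
    pose proof (exp_pos (- c * T)). pose proof (exp_pos c).
    assert (exp c * exp (- c) = 1) by (rewrite <- exp_plus; replace (c + - c) with 0 by ring; apply exp_0).
    apply (Rmult_le_reg_l c); auto.
    replace (c * (exp c / c * (exp (- c * T) - exp (- c * T) * exp (- (c * x))))) with (exp c * exp (- c * T) * (1 - exp (- (c * x)))) by (field; lra).
    apply Rle_trans with (exp c * exp (- c * T) * (c * x * exp (- c))).
    right. replace (exp c * exp (- c * T) * (c * x * exp (- c))) with (c * x * exp (- c * T) * (exp c * exp (- c))) by ring. rewrite H2. ring.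
    apply Rmult_le_compat_l; [apply Rmult_le_pos; lra| auto]. }
  eapply Rle_trans. apply rsum_le. apply H.
  rewrite rsum_scal. rewrite (telescope E n0 (n - n0)).
  unfold E.
  destruct (Compare_dec.le_lt_dec n0 n).
  - replace (n0 + (n - n0))%nat with n by lia. rewrite tl_n. rewrite Rmult_0_r, exp_0.
    pose proof (exp_pos (- c * tl al n n0)). assert (0 < exp c / c) by (apply Rdiv_lt_0_compat; auto; apply exp_pos).
    assert (exp c / c * (1 - exp (- c * tl al n n0)) <= exp c / c * 1) by (apply Rmult_le_compat_l; lra). lra.
  - replace (n - n0)%nat with O by lia. rewrite Nat.add_0_r. rewrite Rminus_diag, Rmult_0_r.
    left; apply Rdiv_lt_0_compat; auto; apply exp_pos.
Qed.


Lemma Ybound (g : nat -> R) K N a :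
  exp (rsum N (fun t => if Nat.ltb (a + t) K then g (a + t)%nat / 2 else 0))
  <= Rmax 1 (sqrt (max_tri K (fun l1 l2 => rprod_range l1 l2 (fun l => exp (g l))))).
Proof.
  rewrite (rsum_trunc N a K (fun j => g j / 2)).
  destruct (Nat.min N (K - a)) as [|m'] eqn:Em.
  - simpl. rewrite exp_0. apply Rmax_l.
  - eapply Rle_trans; [|apply Rmax_r].
    assert (E1 : rprod_range a (a + m') (fun l => exp (g l)) = exp (rsum (S m') (fun t => g (a + t)%nat))).
    { unfold rprod_range. replace (S (a + m') - a)%nat with (S m') by lia. apply rprod_exp. }
    assert (E2 : rsum (S m') (fun t => g (a + t)%nat / 2) = rsum (S m') (fun t => g (a + t)%nat) / 2).
    { unfold Rdiv. apply rsum_scalr. }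
    rewrite E2.
    pose proof (max_tri_ge a (a + m') (fun l1 l2 => rprod_range l1 l2 (fun l => exp (g l))) K ltac:(lia) ltac:(lia)).
    simpl in H. rewrite E1 in H.
    set (s := rsum (S m') (fun t => g (a + t)%nat)) in *.
    assert (exp (s / 2) = sqrt (exp s)).
    { replace s with (s / 2 + s / 2) at 2 by field. rewrite exp_plus. rewrite sqrt_square; auto. left; apply exp_pos. }
    rewrite H0. apply sqrt_le_1_alt. auto.
Qed.


Theorem mainTheorem11
  (d : nat) (alpha beta : R) (X1 W1 W2 W2inv : Mat)
  (n0 n : nat) (u : nat -> R) (w : nat -> Vec) (wstar : Vec)
  (Hbeta : 0 < beta) (Hab : beta < alpha) (Ha1 : alpha < 1)
  (HX1 : pos_def d (madd X1 (mtr X1)))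
  (HW2l : forall i j, (i < d)%nat -> (j < d)%nat -> mmul d W2 W2inv i j = idm i j)
  (HW2r : forall i j, (i < d)%nat -> (j < d)%nat -> mmul d W2inv W2 i j = idm i j)
  (Hn : (n0 <= n)%nat)
  (Hupos : forall k, 0 < u k)
  (Hmod : alpha_moderate alpha beta (q1 d X1) u n0)
  (Hw : forall k, (n0 <= k <= n)%nat -> vnorm d (vsub (w k) wstar) <= u k) :
  vnorm d (T_next d alpha beta X1 (mmul d W1 W2inv) w wstar n0 n)
  <= 2 * exp (q1 d X1 / 2) / q1 d X1 * C_U d alpha beta X1
     * opnorm d (mmul d W1 W2inv) * C_theta d alpha X1
     * (step alpha n / step beta n) * u n.
Proof.
  set (M := mmul d W1 W2inv).
  destruct (Nat.eq_dec d 0) as [Hd0|Hd0].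
  { subst d.
    assert (Hop : opnorm 0 M = 0).
    { destruct (opnorm_lub 0 M) as [H1 H2]. pose proof (opnorm_nonneg 0 M).
      assert (opnorm 0 M <= 0). { apply H2. intros r [v [_ ->]]. unfold vnorm; simpl; rewrite sqrt_0; lra. } lra. }
    unfold vnorm at 1. simpl. rewrite sqrt_0. rewrite Hop. right. ring. }
  assert (Hd : (1 <= d)%nat) by lia.
  set (lam := lambda_min d (madd X1 (mtr X1))).
  set (Lam := lambda_max d (mmul d (mtr X1) X1)).
  set (q := q1 d X1).
  assert (Hqdef : q = lam / 4) by reflexivity.
  assert (Hlam : 0 < lam).
  { destruct (lam_min_spec d _ Hd (symm_S d X1)) as [[v [Hv Hev]] _].
    pose proof (eig_quad d _ _ v Hev). pose proof (HX1 v Hv). pose proof (nsq_pos d v Hv).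
    unfold quad, dot in H. fold lam in H. rewrite H in H0. nra. }
  assert (Hq : 0 < q) by lra.
  assert (HLam : 0 <= Lam).
  { pose proof (lam_max_spec d _ Hd (symm_G d X1) e0). rewrite quad_G, nsq_e0 in H by auto.
    pose proof (nsq_nonneg d (mvec d X1 e0)). fold Lam in H. lra. }
  assert (Hmu : mu d X1 = - lam + Lam) by reflexivity.
  set (al := step alpha).
  set (K := Kc d alpha X1).
  assert (HK : K = ceil_nat (Rpower (Lam / (4 * q - 2 * q)) (1 / alpha))).
  { unfold K, Kc. fold Lam lam q. replace (lam - 2 * q) with (4 * q - 2 * q) by lra. auto. }
  set (g := fun l => step alpha l * (mu d X1 + 2 * q1 d X1)).
  set (y := fun j => if Nat.ltb j K then g j / 2 else 0).
  set (cc := fun j => exp (- q * al j + y j)).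
  assert (Hal : forall j, 0 < al j <= 1).
  { intros j. split. apply step_pos. apply step_le1. lra. }
  assert (Hfac : forall j v, vnorm d (mvec d (Ifac d alpha X1 j) v) <= cc j * vnorm d v).
  { intros j v. unfold Ifac.
    pose proof (Ifac_nsq d X1 (step alpha j) v ltac:(left; apply step_pos) Hd) as H.
    fold lam Lam in H. fold al in H.
    assert (Hco : 1 - al j * lam + al j ^ 2 * Lam <= cc j ^ 2).
    { unfold cc. replace (exp (- q * al j + y j) ^ 2) with (exp (2 * (- q * al j + y j))) by (replace (2 * (- q * al j + y j)) with ((- q * al j + y j) + (- q * al j + y j)) by ring; rewrite exp_plus; ring).
      specialize (Hal j). unfold y. destruct (Nat.ltb_spec j K).
      - unfold g. fold al q. rewrite Hmu.
        pose proof (exp_ineq1_le (al j * (- lam + Lam))).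
        assert (E : 2 * (- q * al j + al j * (- lam + Lam + 2 * q) / 2) = al j * (- lam + Lam)) by (field). rewrite E.
        assert (al j ^ 2 * Lam <= al j * Lam) by (apply Rmult_le_compat_r; [auto| destruct Hal; simpl; nra]). nra.
      - rewrite HK in H0. pose proof (Kc_prop alpha q Lam j ltac:(lra) Hq HLam H0). fold al in H1.
        pose proof (exp_ineq1_le (2 * (- q * al j + 0))).
        assert (al j ^ 2 * Lam <= al j * (2 * q)) by (simpl; nra). nra. }
    rewrite vnorm_nsq. eapply Rle_trans. apply sqrt_le_1_alt. eapply Rle_trans. apply H.
    apply Rmult_le_compat_r. apply nsq_nonneg. apply Hco.
    rewrite sqrt_mult. rewrite sqrt_pow2. right; auto. left; apply exp_pos. apply pow2_ge_0. apply nsq_nonneg. }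
  assert (Hcc : forall j, 0 <= cc j) by (intros; left; apply exp_pos).
  pose proof (prod_bound d _ cc Hfac Hcc) as Hpb.
  set (r := fun k => step alpha k / step beta k).
  assert (Hr : forall k, 0 < r k) by (intros; unfold r; apply Rdiv_lt_0_compat; apply step_pos).
  assert (HopX := opnorm_nonneg d X1).
  assert (HopM := opnorm_nonneg d M).
  set (CU := C_U d alpha beta X1).
  assert (HCU : 0 <= CU) by (unfold CU, C_U; nra).
  assert (Hbr : forall k z, (1 <= k)%nat ->
     vnorm d (mvec d (madd (mscale (step alpha k / step beta k) idm)
                (mscale (- (step alpha (k - 1) / step beta (k - 1))) (Ifac d alpha X1 k))) z)
     <= CU * al k * r k * vnorm d z).
  { intros k z Hk.
    rewrite (vnorm_ext d _ (fun i => (r k - r (k - 1)%nat) * z i + (r (k - 1)%nat * al k) * mvec d X1 z i)).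
    2: { intros i Hi. rewrite mvec_madd, !mvec_mscale, mvec_idm by auto. unfold Ifac. rewrite mvec_madd, mvec_mscale, mvec_idm by auto.
         unfold r, al. ring. }
    eapply Rle_trans. apply vnorm_lin.
    pose proof (bracket_bound alpha beta k Hbeta Hab Ha1 Hk) as [B1 B2]. fold (r k) (r (k-1)%nat) in B1, B2. fold al in B2.
    pose proof (opnorm_bound d X1 z). pose proof (vnorm_nonneg d z). pose proof (vnorm_nonneg d (mvec d X1 z)).
    rewrite Rabs_left1 by lra. rewrite Rabs_pos_eq by (pose proof (Hr (k-1)%nat); pose proof (Hal k); nra).
    pose proof (Hal k) as Halk. pose proof (Hr k) as Hrk. pose proof (Hr (k-1)%nat) as Hrk1.
    assert (2 * (alpha - beta) * al k * r k <= 2 * (alpha - beta) * 1 * r k) by (apply Rmult_le_compat_r; [lra| apply Rmult_le_compat_l; lra]).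
    assert (r (k - 1)%nat <= r k * (1 + 2 * (alpha - beta))) by lra.
    assert (r (k - 1)%nat * al k * vnorm d (mvec d X1 z) <= r (k - 1)%nat * al k * (opnorm d X1 * vnorm d z)).
    { apply Rmult_le_compat_l; auto. pose proof (Hr (k-1)%nat). nra. }
    assert (r (k - 1)%nat * al k * (opnorm d X1 * vnorm d z) <= r k * (1 + 2 * (alpha - beta)) * al k * (opnorm d X1 * vnorm d z)).
    { apply Rmult_le_compat_r. nra. apply Rmult_le_compat_r; lra. }
    assert ((r (k - 1)%nat - r k) * vnorm d z <= 2 * (alpha - beta) * al k * r k * vnorm d z) by (apply Rmult_le_compat_r; lra).
    unfold CU, C_U. nra. }
  assert (Hch : forall k, (n0 <= k <= n)%nat -> u k * r k <= u n * r n * exp (q / 2 * tl al n k)).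
  { apply (chain u r al (q / 2) n0 n). intros k Hk.
    specialize (Hmod k Hk). fold q al in Hmod.
    pose proof (Hupos k). pose proof (Hupos (S k)). pose proof (Hr k). pose proof (Hr (S k)).
    pose proof (step_pos beta k). pose proof (step_pos beta (S k)). pose proof (Hal k). pose proof (Hal (S k)).
    assert (E : al (S k) / al k * (step beta k / step beta (S k)) * r k = r (S k)).
    { unfold r, al. field. repeat split; apply Rgt_not_eq; apply step_pos. }
    apply (Rmult_le_compat_r (u (S k) * r k)) in Hmod; [|nra].
    replace (u k / u (S k) * (u (S k) * r k)) with (u k * r k) in Hmod by (field; lra).
    rewrite <- E. replace (u (S k) * (al (S k) / al k * (step beta k / step beta (S k)) * r k) * exp (q / 2 * al (S k)))
      with (al (S k) / al k * (step beta k / step beta (S k)) * exp (q / 2 * al (S k)) * (u (S k) * r k)) by ring.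
    auto. }
  set (CT := C_theta d alpha X1).
  assert (HCT : 1 <= CT) by apply Rmax_l.
  set (Cst := CT * CU * opnorm d M * (u n * r n)).
  assert (Hterm : forall k, (S n0 <= k <= n)%nat ->
     vnorm d (mvec d (mmul d (mprod_range d (Ifac d alpha X1) (S k) n)
        (mmul d (madd (mscale (step alpha k / step beta k) idm)
                (mscale (- (step alpha (k - 1) / step beta (k - 1))) (Ifac d alpha X1 k))) M)) (vsub (w k) wstar))
     <= Cst * (al k * exp (- (q / 2) * tl al n k))).
  { intros k Hk. set (B := madd (mscale (step alpha k / step beta k) idm)
                (mscale (- (step alpha (k - 1) / step beta (k - 1))) (Ifac d alpha X1 k))).
    set (v := vsub (w k) wstar).
    rewrite (vnorm_ext d _ (mvec d (mprod_range d (Ifac d alpha X1) (S k) n) (mvec d B (mvec d M v)))).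
    2: { intros i Hi. rewrite mvec_mmul. apply mvec_ext. intros; apply mvec_mmul. }
    unfold mprod_range. eapply Rle_trans. apply Hpb.
    assert (Ep : rprod (S n - S k) (fun t => cc (S k + t)%nat) = exp (- q * tl al n k) * exp (rsum (S n - S k) (fun t => y (S k + t)%nat))).
    { unfold cc. rewrite rprod_exp, <- exp_plus. f_equal. unfold tl. rewrite <- rsum_scal, <- rsum_plus. apply rsum_ext; intros; ring. }
    rewrite Ep.
    pose proof (Ybound g K (S n - S k) (S k)) as HY. fold CT in HY.
    change (rsum (S n - S k) (fun t => y (S k + t)%nat)) with (rsum (S n - S k) (fun t => if Nat.ltb (S k + t) K then g (S k + t)%nat / 2 else 0)).
    pose proof (Hbr k (mvec d M v) ltac:(lia)). fold B in H.
    pose proof (opnorm_bound d M v).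
    pose proof (Hw k ltac:(lia)). fold v in H1.
    pose proof (Hch k ltac:(lia)).
    pose proof (vnorm_nonneg d v). pose proof (vnorm_nonneg d (mvec d M v)). pose proof (vnorm_nonneg d (mvec d B (mvec d M v))).
    pose proof (exp_pos (- q * tl al n k)).
    set (Y := exp (rsum (S n - S k) (fun t => if Nat.ltb (S k + t) K then g (S k + t)%nat / 2 else 0))) in *.
    assert (HY0 : 0 < Y) by apply exp_pos.
    pose proof (Hal k). pose proof (Hr k).
    assert (E2 : exp (- q * tl al n k) * exp (q / 2 * tl al n k) = exp (- (q / 2) * tl al n k)) by (rewrite <- exp_plus; f_equal; field).
    assert (Hpos1 : 0 <= CU * al k * r k) by (apply Rmult_le_pos; [apply Rmult_le_pos|]; lra).
    apply Rle_trans with (exp (- q * tl al n k) * CT * (CU * al k * r k * (opnorm d M * u k))).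
    { apply Rle_trans with (exp (- q * tl al n k) * Y * (CU * al k * r k * (opnorm d M * vnorm d v))).
      apply Rmult_le_compat_l. apply Rmult_le_pos; lra. eapply Rle_trans. apply H. apply Rmult_le_compat_l. apply Rmult_le_pos; [apply Rmult_le_pos|]; lra. auto.
      apply Rle_trans with (exp (- q * tl al n k) * CT * (CU * al k * r k * (opnorm d M * vnorm d v))).
      apply Rmult_le_compat_r. apply Rmult_le_pos; [exact Hpos1| apply Rmult_le_pos; lra]. apply Rmult_le_compat_l; [lra| exact HY].
      apply Rmult_le_compat_l. apply Rmult_le_pos; lra. apply Rmult_le_compat_l. exact Hpos1. apply Rmult_le_compat_l; auto. }
    unfold Cst. rewrite <- E2.
    replace (exp (- q * tl al n k) * CT * (CU * al k * r k * (opnorm d M * u k))) with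
      ((CT * CU * opnorm d M * al k * exp (- q * tl al n k)) * (u k * r k)) by ring.
    replace (CT * CU * opnorm d M * (u n * r n) * (al k * (exp (- q * tl al n k) * exp (q / 2 * tl al n k)))) with
      ((CT * CU * opnorm d M * al k * exp (- q * tl al n k)) * (u n * r n * exp (q / 2 * tl al n k))) by ring.
    apply Rmult_le_compat_l; auto. repeat apply Rmult_le_pos; lra. }
  unfold T_next, rsum_range.
  eapply Rle_trans. apply vnorm_rsum.
  eapply Rle_trans. apply rsum_le. intros t Ht. apply Hterm. lia.
  rewrite rsum_scal.
  pose proof (sum_bound al (q / 2) n0 n ltac:(lra) ltac:(intros; pose proof (Hal k); lra)) as HS.
  assert (HCst : 0 <= Cst) by (unfold Cst; pose proof (Hupos n); pose proof (Hr n); apply Rmult_le_pos; [apply Rmult_le_pos; [apply Rmult_le_pos|]|apply Rmult_le_pos]; lra).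
  eapply Rle_trans. apply Rmult_le_compat_l. exact HCst. exact HS.
  unfold Cst. fold q. right. unfold CT, CU, M, r, al. clearbody q. field. repeat split; try lra; apply Rgt_not_eq, step_pos.
Qed.
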